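(* Let $n,k$ be integers with $1\le k\le n-2$ and let $c_0,\dots,c_{n-1}$ be real constants. For an ordered bid vector $b_1\ge\dots\ge b_n\ge 0$ define $r_i=c_0+c_1b_1+\dots+c_{i-1}b_{i-1}+c_ib_{i+1}+\dots+c_{n-1}b_n$ for $i=1,\dots,n$. Suppose that for every ordered bid vector $b_1\ge\dots\ge b_n\ge 0$ we have both $r_n\ge 0$ (IR$_u$) and $\sum_{i=1}^n r_i\le k\,b_k$ (Approx-IR$_M$). Then $c_i=0$ for $i=0,1,\dots,k-1$.
   Context: Here $r_i$ is the rebate given to the $i$-th highest included bidder in a block of $n$ included transactions of which the top $k$ are confirmed; $r_i$ depends only on the other bids, listed in decreasing order. *)

(* Defs.v *)
From mathcomp Require Import all_boot all_order all_algebra.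
Set Implicit Arguments. Unset Strict Implicit. Unset Printing Implicit Defensive.
Import Order.TTheory GRing.Theory Num.Theory.
Local Open Scope ring_scope.

(* Bids are 1-indexed: b 1, ..., b n (values of b outside 1..n are irrelevant).
   Constants c 0, ..., c (n-1). *)

Definition ordered_bids (R : realFieldType) (n : nat) (b : nat -> R) : Prop :=
  (forall i, (1 <= i < n)%N -> b i.+1 <= b i) /\ (forall i, (1 <= i <= n)%N -> 0 <= b i).

Definition rebate (R : realFieldType) (n : nat) (c b : nat -> R) (i : nat) : R :=
  c 0%N + \sum_(1 <= j < i) c j * b j + \sum_(i <= j < n) c j * b j.+1.

(* Main.v *)
Require Import Defs.
From mathcomp Require Import all_boot all_order all_algebra.
From mathcomp Require Import zify.
Import Order.TTheory GRing.Theory Num.Theory.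
Local Open Scope ring_scope.

Lemma step (R : realFieldType) (n k : nat) (c : nat -> R) (m : nat) :
  (k <= n - 2)%N -> (m < k)%N -> (forall j, (j < m)%N -> c j = 0) ->
  (forall b : nat -> R, ordered_bids n b -> 0 <= rebate n c b n) ->
  (forall b : nat -> R, ordered_bids n b ->
     \sum_(1 <= i < n.+1) rebate n c b i <= k%:R * b k) ->
  c m = 0.
Proof.
move=> hkn hmk hc hIR hM.
pose b : nat -> R := fun j => if (j <= m)%N then 1 else 0.
have hb : ordered_bids n b.
  split=> i _; rewrite /b.
  - by case: ifP; case: ifP => // /negbT h1 h2; exfalso; move: h1 h2; rewrite -ltnNge => h1 h2; lia.
  - by case: ifP.
have hmn : (m < n)%N by lia.
have hrn : rebate n c b n = c m.
  rewrite /rebate [X in _ + X = _]big_geq // addr0.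
  case: (posnP m) => [m0|m0].
    rewrite big_nat_cond big1 ?addr0 ?m0 // => j /andP[/andP[h1 _] _].
    by rewrite /b; case: ifP => h; [lia|rewrite mulr0].
  rewrite hc // add0r (big_cat_nat (n:=m) (m:=1) (p:=n)) //=; try lia.
  rewrite (big_cat_nat (n:=m.+1) (m:=m) (p:=n)) //=; try lia.
  rewrite big_nat1 /b leqnn mulr1.
  rewrite big_nat_cond big1 ?add0r; last first.
    by move=> j /andP[/andP[_ h] _]; rewrite hc ?mul0r.
  rewrite big_nat_cond big1 ?addr0 // => j /andP[/andP[h _] _].
  by case: ifP => h'; [lia|rewrite mulr0].
have cm0 : 0 <= c m by rewrite -hrn; apply: hIR.
have t1 : forall j, 0 <= c j * b j.
  move=> j; rewrite /b; case: ifP => h; last by rewrite mulr0.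
  rewrite mulr1; case: (ltngtP j m) => [h'|h'|->//]; [by rewrite hc | lia].
have t2 : forall j, 0 <= c j * b j.+1.
  move=> j; rewrite /b; case: ifP => h; last by rewrite mulr0.
  by rewrite hc ?mul0r.
have rge : forall i, 0 <= rebate n c b i.
  move=> i; rewrite /rebate.
  have := t1 0%N; rewrite /b /= mulr1 => h0.
  by rewrite !addr_ge0 // sumr_ge0.
have := hM b hb.
rewrite big_nat_recr ?hrn /b; last lia.
have -> : (k <= m)%N = false by lia.
rewrite mulr0 => hle.
apply/eqP; rewrite eq_le cm0 andbT.
apply: le_trans hle; rewrite lerDr sumr_ge0 //.
Qed.

Theorem claim2 (R : realFieldType) (n k : nat) (c : nat -> R) :
  (1 <= k)%N -> (k <= n - 2)%N ->
  (forall b : nat -> R, ordered_bids n b -> 0 <= rebate n c b n) ->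
  (forall b : nat -> R, ordered_bids n b ->
     \sum_(1 <= i < n.+1) rebate n c b i <= k%:R * b k) ->
  forall i, (i < k)%N -> c i = 0.
Proof.
move=> hk hkn hIR hM i.
elim/ltn_ind: i => i IH hik.
apply: (@step R n k c i hkn hik) => // j hj; apply: IH => //; lia.
Qed.
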